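(* Let $\mathfrak{R}$ be a complete rewriting system on $\Sigma$ that is cyclically terminating. If there are no rules in $\mathfrak{R}$ with cyclical overlaps or cyclical inclusions, then $\mathfrak{R}$ is cyclically confluent.
   Context: $\Sigma^*$ is the free monoid on $\Sigma$; a rewriting system is a set of rules $l\to r$ with $l,r\in\Sigma^*$, complete meaning terminating and confluent; $plq\to prq$ is one rewriting step. $u\simeq v$ means $u=ab$, $v=ba$ for some words $a,b$ (cyclic conjugates). $u\rightsquigarrow v$ means some cyclic conjugate $\tilde u$ of $u$ (possibly $u$) satisfies $\tilde u\to v$; $\rightsquigarrow^*$ is its reflexive–transitive closure. $\mathfrak{R}$ is cyclically terminating if there is no infinite sequence $u_1\rightsquigarrow u_2\rightsquigarrow\cdots$, and cyclically confluent if whenever $w\rightsquigarrow^* u$ and $w\rightsquigarrow^* v$ there exist $z\simeq z'$ with $u\rightsquigarrow^* z$ and $v\rightsquigarrow^* z'$. There is a cyclical overlap between two rules if they have the form $xuy\to u'$ and $yvx\to v'$ with $u',v'$ words, $u,v,x,y$ non-empty words, and $u'v$, $v'u$ not cyclic conjugates. There is a cyclical inclusion between rules $l\to v$ and $l'\to v'$ if either $l'\simeq l$ and $v,v'$ are not cyclic conjugates, or $l'$ is a proper subword of a cyclic conjugate $\ell_1$ of $l$, written $\ell_1=ul'$ with $u$ non-empty, and $v$ and $uv'$ are not cyclic conjugates. *)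

(* Defs.v *)
From Stdlib Require Import List Relations.
Import ListNotations.
Set Implicit Arguments.

Section Rewriting.
Variable Sigma : Type.

Definition word := list Sigma.

Definition rws := word -> word -> Prop.

Definition step (R : rws) (u v : word) : Prop :=
  exists p q l r, R l r /\ u = p ++ l ++ q /\ v = p ++ r ++ q.

Definition rewrites (R : rws) : word -> word -> Prop := clos_refl_trans _ (step R).

Definition terminating (R : rws) : Prop :=
  ~ exists f : nat -> word, forall n, step R (f n) (f (S n)).

Definition confluent (R : rws) : Prop :=
  forall w u v, rewrites R w u -> rewrites R w v ->
    exists z, rewrites R u z /\ rewrites R v z.

Definition complete (R : rws) : Prop := terminating R /\ confluent R.

Definition cconj (u v : word) : Prop :=
  exists a b, u = a ++ b /\ v = b ++ a.

Definition cstep (R : rws) (u v : word) : Prop :=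
  exists u', cconj u u' /\ step R u' v.

Definition crewrites (R : rws) : word -> word -> Prop := clos_refl_trans _ (cstep R).

Definition cyclically_terminating (R : rws) : Prop :=
  ~ exists f : nat -> word, forall n, cstep R (f n) (f (S n)).

Definition cyclically_confluent (R : rws) : Prop :=
  forall w u v, crewrites R w u -> crewrites R w v ->
    exists z z', cconj z z' /\ crewrites R u z /\ crewrites R v z'.

Definition cyclical_overlap (l1 r1 l2 r2 : word) : Prop :=
  exists x u y v, x <> [] /\ u <> [] /\ y <> [] /\ v <> [] /\
    l1 = x ++ u ++ y /\ l2 = y ++ v ++ x /\ ~ cconj (r1 ++ v) (r2 ++ u).

Definition cyclical_inclusion (l v l' v' : word) : Prop :=
  (cconj l' l /\ ~ cconj v v') \/
  (exists l1 u, cconj l l1 /\ l1 = u ++ l' /\ u <> [] /\ ~ cconj v (u ++ v')).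

End Rewriting.

(* Main.v *)
Require Import Defs.
From Stdlib Require Import List Relations Classical ClassicalEpsilon.
Import ListNotations.

Section S.
Local Set Implicit Arguments.
Variable Sigma : Type.
Implicit Types u v w x y z : word Sigma.

Lemma cc_refl u : cconj u u.
Proof. exists [], u. rewrite app_nil_r. auto. Qed.

Lemma cc_sym u v : cconj u v -> cconj v u.
Proof. intros (a & b & -> & ->). exists b, a. auto. Qed.

Lemma cc_trans u v w : cconj u v -> cconj v w -> cconj u w.
Proof.
  intros (a & b & -> & E) (c & d & E2 & ->). rewrite E2 in E.
  destruct (app_eq_app _ _ _ _ E) as (l & [[E3 E4]|[E3 E4]]); subst.
  - exists l, (d ++ b). rewrite !app_assoc. auto.
  - exists (a ++ c), l. rewrite !app_assoc. auto.
Qed.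

Lemma cc_app u v : cconj (u ++ v) (v ++ u).
Proof. exists u, v. auto. Qed.

Variable R : rws Sigma.

Lemma step_cstep u v : step R u v -> cstep R u v.
Proof. intros H. exists u. split; [apply cc_refl|exact H]. Qed.

Lemma rew_crew u v : rewrites R u v -> crewrites R u v.
Proof.
  induction 1. - apply rt_step, step_cstep; auto. - apply rt_refl.
  - eapply rt_trans; eauto.
Qed.

Lemma cstep_conj x y z : cconj x y -> cstep R y z -> cstep R x z.
Proof. intros H (y' & H1 & H2). exists y'. split; auto. eapply cc_trans; eauto. Qed.

Lemma transfer x y z : cconj x y -> crewrites R y z ->
  exists z', cconj z' z /\ crewrites R x z'.
Proof.
  intros H Hr. apply clos_rt_rt1n in Hr. destruct Hr as [|y1 z Hs Hr].
  - exists x. split; [auto|apply rt_refl].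
  - exists z. split; [apply cc_refl|]. eapply rt_trans.
    + apply rt_step. eapply cstep_conj; eauto.
    + apply clos_rt1n_rt; auto.
Qed.

Definition J u v := exists z z', cconj z z' /\ crewrites R u z /\ crewrites R v z'.

Lemma J_conj u u' v v' : cconj u u' -> cconj v v' -> J u' v' -> J u v.
Proof.
  intros Hu Hv (z & z' & Hz & H1 & H2).
  destruct (transfer Hu H1) as (c & Hc & Hc1).
  destruct (transfer Hv H2) as (d & Hd & Hd1).
  exists c, d. repeat split; auto.
  eapply cc_trans; [exact Hc|]. eapply cc_trans; [exact Hz|]. apply cc_sym; auto.
Qed.

Lemma J_cc u v : cconj u v -> J u v.
Proof. intros H. exists u, v. repeat split; auto; apply rt_refl. Qed.

Hypothesis Hconf : confluent R.

Lemma J_lin W A B u v : step R W A -> step R W B -> cconj u A -> cconj v B -> J u v.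
Proof.
  intros HA HB Hu Hv. apply (J_conj Hu Hv).
  destruct (Hconf (rt_step _ _ _ _ HA) (rt_step _ _ _ _ HB)) as (z & H1 & H2).
  exists z, z. repeat split; [apply cc_refl|apply rew_crew|apply rew_crew]; auto.
Qed.

Lemma mkstep p l q r : R l r -> step R (p ++ l ++ q) (p ++ r ++ q).
Proof. intros H. exists p, q, l, r. auto. Qed.

Hypothesis Hov : forall l1 r1 l2 r2, R l1 r1 -> R l2 r2 -> ~ cyclical_overlap l1 r1 l2 r2.
Hypothesis Hinc : forall l1 r1 l2 r2, R l1 r1 -> R l2 r2 -> ~ cyclical_inclusion l1 r1 l2 r2.

Lemma step_of (p l q r W A : word Sigma) : R l r -> W = p ++ l ++ q -> A = p ++ r ++ q -> step R W A.
Proof. intros H -> ->. exists p, q, l, r. auto. Qed.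

Lemma cc_of (P Q X Y : word Sigma) : X = P ++ Q -> Y = Q ++ P -> cconj X Y.
Proof. intros -> ->. exists P, Q. auto. Qed.

Ltac norm := repeat rewrite <- app_assoc; simpl; rewrite ?app_nil_r; reflexivity.

Lemma core l1 r1 s1 l2 r2 s2 a b : R l1 r1 -> R l2 r2 ->
  l1 ++ s1 = a ++ b -> l2 ++ s2 = b ++ a -> J (r1 ++ s1) (r2 ++ s2).
Proof.
  intros H1 H2 E1 E2.
  destruct (app_eq_app _ _ _ _ E1) as (f & [[-> ->]|[-> ->]]).
  - (* l1 = a ++ f, b = f ++ s1 *)
    rewrite <- app_assoc in E2.
    destruct (app_eq_app _ _ _ _ E2) as (h & [[-> E3]|[E3 ->]]).
    + destruct (app_eq_app _ _ _ _ E3) as (k & [[-> ->]|[-> ->]]).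
      * (* s1 = h ++ k, s2 = k ++ a *)
        apply (J_lin (W := a ++ f ++ h ++ k) (A := r1 ++ h ++ k) (B := a ++ r2 ++ k)).
        -- apply (step_of [] (h ++ k) H1); norm.
        -- apply (step_of a k H2); norm.
        -- apply cc_refl.
        -- apply (cc_of (r2 ++ k) a); norm.
      * (* h = s1 ++ k, a = k ++ s2 : l2 = f ++ s1 ++ k, l1 = k ++ s2 ++ f *)
        destruct k as [|c k].
        { simpl in *.
          apply (J_lin (W := s2 ++ f ++ s1) (A := r1 ++ s1) (B := s2 ++ r2)).
          -- apply (step_of [] s1 H1); norm.
          -- apply (step_of s2 [] H2); norm.
          -- apply cc_refl.
          -- apply (cc_of r2 s2); norm. }
        destruct f as [|d f].
        { simpl in *.
          apply (J_lin (W := s1 ++ (c :: k) ++ s2) (A := s1 ++ r1) (B := r2 ++ s2)).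
          -- apply (step_of s1 [] H1); norm.
          -- apply (step_of [] s2 H2); norm.
          -- apply (cc_of r1 s1); norm.
          -- apply cc_refl. }
        destruct s1 as [|e s1]; destruct s2 as [|g s2].
        {
          apply J_cc. apply NNPP. intro Hn.
          apply (Hinc H2 H1). left. split.
          - apply (cc_of (c :: k) (d :: f)); norm.
          - intro Hc. apply Hn. apply cc_sym. rewrite !app_nil_r. exact Hc. }
        {
          apply (J_conj (u' := r1 ++ []) (v' := r2 ++ g :: s2)); try apply cc_refl.
          apply J_cc. apply NNPP. intro Hn.
          apply (Hinc H1 H2). right.
          exists ((g :: s2) ++ (d :: f) ++ (c :: k)), (g :: s2). split; [|split; [norm|split; [discriminate|]]].
          - apply (cc_of (c :: k) ((g :: s2) ++ (d :: f))); norm.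
          - intro Hc. apply Hn. eapply cc_trans; [|apply cc_app]. rewrite app_nil_r. exact Hc. }
        {
          apply J_cc. apply NNPP. intro Hn.
          apply (Hinc H2 H1). right.
          exists ((e :: s1) ++ (c :: k) ++ (d :: f)), (e :: s1). split; [|split; [norm|split; [discriminate|]]].
          - apply (cc_of (d :: f) ((e :: s1) ++ (c :: k))); norm.
          - intro Hc. apply Hn. apply cc_sym. rewrite app_nil_r.
            eapply cc_trans; [exact Hc|apply cc_app]. }
        { apply J_cc. apply NNPP. intro Hn.
          apply (Hov H1 H2).
          exists (c :: k), (g :: s2), (d :: f), (e :: s1).
          repeat split; try discriminate; try norm. exact Hn. }
    + (* f = l2 ++ h, s2 = h ++ s1 ++ a *)
      subst f.
      apply (J_lin (W := a ++ l2 ++ h ++ s1) (A := r1 ++ s1) (B := a ++ r2 ++ h ++ s1)).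
      -- apply (step_of [] s1 H1); norm.
      -- apply (step_of a (h ++ s1) H2); norm.
      -- apply cc_refl.
      -- apply (cc_of (r2 ++ h ++ s1) a); norm.
  - destruct (app_eq_app _ _ _ _ E2) as (c & [[-> E3]|[-> ->]]).
    + destruct (app_eq_app _ _ _ _ E3) as (d & [[-> ->]|[-> ->]]).
      * apply (J_lin (W := b ++ c ++ d ++ f) (A := b ++ r1 ++ f) (B := r2 ++ d ++ f)).
        -- apply (step_of b f H1); norm.
        -- apply (step_of [] (d ++ f) H2); norm.
        -- apply (cc_of (r1 ++ f) b); norm.
        -- apply cc_refl.
      * apply (J_lin (W := b ++ l1 ++ d ++ s2) (A := b ++ r1 ++ d ++ s2) (B := r2 ++ s2)).
        -- apply (step_of b (d ++ s2) H1); norm.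
        -- apply (step_of [] s2 H2); norm.
        -- apply (cc_of (r1 ++ d ++ s2) b); norm.
        -- apply cc_refl.
    + exists (r1 ++ f ++ r2 ++ c), (r2 ++ c ++ r1 ++ f). split; [|split].
      * apply (cc_of (r1 ++ f) (r2 ++ c)); norm.
      * apply rt_step, step_cstep. apply (step_of (r1 ++ f) c H2); norm.
      * apply rt_step, step_cstep. apply (step_of (r2 ++ c) f H1); norm.
Qed.

Lemma local w u1 u2 : cstep R w u1 -> cstep R w u2 -> J u1 u2.
Proof.
  intros (w1 & C1 & (p1 & q1 & l1 & r1 & H1 & -> & ->)) (w2 & C2 & (p2 & q2 & l2 & r2 & H2 & -> & ->)).
  apply (J_conj (u' := r1 ++ q1 ++ p1) (v' := r2 ++ q2 ++ p2)).
  - apply (cc_of p1 (r1 ++ q1)); norm.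
  - apply (cc_of p2 (r2 ++ q2)); norm.
  - assert (C : cconj (l1 ++ q1 ++ p1) (l2 ++ q2 ++ p2)).
    { eapply cc_trans; [apply (cc_of (l1 ++ q1) p1); norm|].
      eapply cc_trans; [apply cc_sym; exact C1|].
      eapply cc_trans; [exact C2|].
      apply (cc_of p2 (l2 ++ q2)); norm. }
    destruct C as (a & b & E1 & E2).
    eapply core; [exact H1|exact H2|exact E1|exact E2].
Qed.

Lemma crew_conj x y z : cconj x y -> crewrites R y z -> exists z', cconj z' z /\ crewrites R x z'.
Proof. apply transfer. Qed.

Lemma newman w : Acc (fun y x => cstep R x y) w ->
  forall u v, crewrites R w u -> crewrites R w v -> J u v.
Proof.
  induction 1 as [w _ IH]. intros u v Hu Hv.
  apply clos_rt_rt1n in Hu. apply clos_rt_rt1n in Hv.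
  destruct Hu as [|u1 u Su Hu].
  { exists v, v. repeat split; [apply cc_refl| |apply rt_refl]. apply clos_rt1n_rt; auto. }
  destruct Hv as [|v1 v Sv Hv].
  { exists u, u. repeat split; [apply cc_refl|apply rt_refl|]. apply rt_trans with u1; [apply rt_step; auto|apply clos_rt1n_rt; auto]. }
  apply clos_rt1n_rt in Hu. apply clos_rt1n_rt in Hv.
  destruct (local Su Sv) as (a & b & Cab & Ha & Hb).
  destruct (IH u1 Su u a Hu Ha) as (c & c' & Cc & Huc & Hac').
  destruct (transfer (cc_sym Cab) Hac') as (c'' & Cc'' & Hbc'').
  assert (Hv1 : crewrites R v1 c'') by (eapply rt_trans; eauto).
  destruct (IH v1 Sv v c'' Hv Hv1) as (d & d' & Cd & Hvd & Hcd').
  assert (Ccc : cconj c c'') by (eapply cc_trans; [exact Cc|apply cc_sym; exact Cc'']).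
  destruct (transfer Ccc Hcd') as (e & Ce & Hce).
  exists e, d. repeat split.
  - eapply cc_trans; [exact Ce|apply cc_sym; exact Cd].
  - eapply rt_trans; eauto.
  - exact Hvd.
Qed.

End S.

Lemma wf_of (Sigma : Type) (R : rws Sigma) : cyclically_terminating R ->
  forall w, Acc (fun y x => cstep R x y) w.
Proof.
  intros HT w0. apply NNPP. intro H0.
  assert (Hn : forall x, ~ Acc (fun y x => cstep R x y) x ->
     exists y, cstep R x y /\ ~ Acc (fun y x => cstep R x y) y).
  { intros x Hx. apply NNPP. intro Hc. apply Hx. constructor. intros y Hy.
    apply NNPP. intro Hy'. apply Hc. exists y. auto. }
  set (P := fun x => ~ Acc (fun y x => cstep R x y) x).
  assert (nxt : forall s : {x | P x}, {y | cstep R (proj1_sig s) y /\ P y}).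
  { intros [x Hx]. apply constructive_indefinite_description. apply Hn. exact Hx. }
  set (g := fun s : {x | P x} => exist P (proj1_sig (nxt s)) (proj2 (proj2_sig (nxt s)))).
  apply HT. exists (fun n => proj1_sig (Nat.iter n g (exist P w0 H0))).
  intro n. simpl. exact (proj1 (proj2_sig (nxt _))).
Qed.

Theorem theorem5p9 (Sigma : Type) (R : rws Sigma) :
  complete R -> cyclically_terminating R ->
  (forall l1 r1 l2 r2, R l1 r1 -> R l2 r2 -> ~ cyclical_overlap l1 r1 l2 r2) ->
  (forall l1 r1 l2 r2, R l1 r1 -> R l2 r2 -> ~ cyclical_inclusion l1 r1 l2 r2) ->
  cyclically_confluent R.
Proof.
  intros [_ Hc] HT Hov Hinc w u v Hu Hv.
  exact (newman Hc Hov Hinc (wf_of _ _ HT w) Hu Hv).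
Qed.
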